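(* Consider running GD-$k$ with rate $r=\frac{1}{\gamma k^2}$ on an instance $\sigma$ of $k$-MPMD with $m$ requests on an $H$-metric space $(\chi,d_H)$ with parameter $\gamma$, and let $\mathcal M=\{M_1,\ldots,M_p\}$ be the output perfect $k$-way matching, $M_\ell=\{v_{\ell,1},\ldots,v_{\ell,k}\}$. Let $T$ be the time at which all requests are matched. Then the total distance cost satisfies $$\sum_{\ell=1}^p d_H(\mathrm{pos}(v_{\ell,1}),\ldots,\mathrm{pos}(v_{\ell,k}))\le 4\gamma mk\sum_{S\subseteq V}\mathrm{sur}(S)(k-\mathrm{sur}(S))\,y_S(T)\le 4\gamma mk\,\mathcal D'(\sigma),$$ where $\mathcal D'(\sigma)$ is the optimal value of $(\mathcal D')$.
   Context: $k\ge2$. An $H$-metric with parameter $\gamma$ (integer, $1\le\gamma\le k-1$) is a map $d_H:\chi^k\to[0,\infty)$ that is invariant under permutation of its arguments, is zero iff all arguments are equal, satisfies $d_H(p_1,\ldots,p_k)\le d_H(p_1,\ldots,p_i,a,\ldots,a)+d_H(a,\ldots,a,p_{i+1},\ldots,p_k)$ for all $p_j,a\in\chi$ and $i\in\{1,\dots,k\}$ (with $k-i$, resp. $i$, copies of $a$), and satisfies: $d_H(p)\le d_H(p')$ whenever the set of distinct entries of $p$ is a proper subset of that of $p'$, and $d_H(p)\le\gamma d_H(p')$ whenever these sets are equal. An instance is $\sigma=(V,\mathrm{atime},\mathrm{pos})$ with $V=\{u_1,\ldots,u_m\}$ ($m$ a multiple of $k$), nondecreasing arrival times $\mathrm{atime}:V\to\mathbb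 R_{\ge0}$ and positions $\mathrm{pos}:V\to\chi$. The metric $d$ on $\chi$ is $d(p,q):=d_H(p,q,\ldots,q)+d_H(q,p,\ldots,p)$ (first argument once, second $k-1$ times); $E$ is the set of unordered pairs of distinct requests, $\mathrm{opt\text{-}cost}(\{u,w\}):=d(\mathrm{pos}(u),\mathrm{pos}(w))+|\mathrm{atime}(u)-\mathrm{atime}(w)|$; for $S\subseteq V$, $\mathrm{sur}(S):=|S|\bmod k$ and $\delta(S)$ is the set of pairs with exactly one element in $S$. The LP $(\mathcal D')$ is: maximize $\sum_{S\subseteq V}\mathrm{sur}(S)(k-\mathrm{sur}(S))y_S$ subject to $\sum_{S:e\in\delta(S)}y_S\le\frac{1}{\gamma k^2}\mathrm{opt\text{-}cost}(e)$ for all $e\in E$ and $y_S\ge0$ for all $S\subseteq V$. Algorithm GD-$k$ (Greedy Dual for $k$-MPMD) runs in continuous time from $0$. It maintains: a partition of the already-arrived requests into ''active sets'' ($A(v)$ denotes the active set containing $v$); a family $\mathcal M$ of disjoint $k$-element sets of requests (the groups matched so far); a request is free if it lies in no set of $\mathcal M$, and $\mathrm{free}(S)$ is the set of free requests of $S$; and dual values $y_S(\tau)\ge0$ for $S\subseteq V$, all initially $0$. When a request $v$ arrives, $A(v):=\{v\}$ is created. At every moment, for each active set $S$ with $\mathrm{free}(S)\ne\emptyset$, $y_S$ increases continuously at rate $r$; all other $y_S$ stay constant. Whenever a pair $e=\{u,w\}$ of arrived requests with $A(u)\ne A(w)$ becomes tight, i.e. $\sum_{S:e\in\delta(S)}y_S=\frac{1}{\gamma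 k^2}\mathrm{opt\text{-}cost}(e)$, the algorithm replaces $A(u)$ and $A(w)$ by the single active set $S=A(u)\cup A(w)$, marks $e$, and, while $|\mathrm{free}(S)|\ge k$, chooses arbitrarily $k$ free requests of $S$ and adds them as a group to $\mathcal M$ (they are matched at the current time). *)

(* Defs.v *)
From HB Require Import structures.
From mathcomp Require Import all_boot all_order all_algebra perm.
From mathcomp Require Import reals.
Set Implicit Arguments. Unset Strict Implicit. Unset Printing Implicit Defensive.
Import Order.TTheory GRing.Theory Num.Theory.
Local Open Scope ring_scope.

Section HMetric.
Variables (R : realType) (X : Type) (k : nat).

Definition entry (p : 'I_k -> X) (x : X) : Prop := exists j, p j = x.

Definition entries_psubset (p p' : 'I_k -> X) : Prop :=
  (forall x, entry p x -> entry p' x) /\ (exists x, entry p' x /\ ~ entry p x).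

Definition entries_eq (p p' : 'I_k -> X) : Prop :=
  forall x, entry p x <-> entry p' x.

Definition is_Hmetric (dH : ('I_k -> X) -> R) (gamma : nat) : Prop :=
  (forall p, 0 <= dH p) /\
  (forall (s : {perm 'I_k}) p, dH (fun j => p (s j)) = dH p) /\
  (forall p, dH p = 0 <-> (forall i j, p i = p j)) /\
  (forall p (a : X) (i : nat), (1 <= i <= k)%N ->
      dH p <= dH (fun j : 'I_k => if (j < i)%N then p j else a)
              + dH (fun j : 'I_k => if (j < i)%N then a else p j)) /\
  (forall p p', entries_psubset p p' -> dH p <= dH p') /\
  (forall p p', entries_eq p p' -> dH p <= gamma%:R * dH p').

End HMetric.

Section GD.
Variables (R : realType) (X : Type) (k gamma : nat) (dH : ('I_k -> X) -> R).
Variables (m : nat) (atime : 'I_m -> R) (pos : 'I_m -> X).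

(* d(p,q) = d_H(p,q,...,q) + d_H(q,p,...,p) *)
Definition dist (p q : X) : R :=
  dH (fun j : 'I_k => if nat_of_ord j == 0%N then p else q)
  + dH (fun j : 'I_k => if nat_of_ord j == 0%N then q else p).

Definition opt_cost (u w : 'I_m) : R :=
  dist (pos u) (pos w) + `|atime u - atime w|.

Definition rate : R := (gamma%:R * (k%:R) ^+ 2)^-1.

Definition sur (S : {set 'I_m}) : nat := (#|S| %% k)%N.

Definition in_delta (S : {set 'I_m}) (u w : 'I_m) : bool := (u \in S) != (w \in S).

Definition ysum (y : {set 'I_m} -> R) (u w : 'I_m) : R :=
  \sum_(S : {set 'I_m} | in_delta S u w) y S.

Definition dual_obj (y : {set 'I_m} -> R) : R :=
  \sum_(S : {set 'I_m}) (sur S)%:R * (k - sur S)%:R * y S.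

Definition dual_feasible (y : {set 'I_m} -> R) : Prop :=
  (forall S, 0 <= y S) /\
  (forall u w : 'I_m, u != w -> ysum y u w <= rate * opt_cost u w).

Definition dual_opt : R :=
  sup (fun z : R => exists2 y, dual_feasible y & dual_obj y = z).

(* A state of GD-k: current time, arrived requests, partition of the
   arrived requests into active sets, family of matched groups, duals. *)
Record state := State {
  st_time : R;
  st_arr : {set 'I_m};
  st_act : {set {set 'I_m}};
  st_match : {set {set 'I_m}};
  st_y : {set 'I_m} -> R }.

Definition init_state : state := State 0 set0 set0 set0 (fun _ => 0).

Definition free (s : state) (S : {set 'I_m}) : {set 'I_m} :=
  S :\: cover (st_match s).

Definition blk (s : state) (v : 'I_m) : {set 'I_m} := pblock (st_act s) v.

Definition grow (s : state) (dt : R) : {set 'I_m} -> R :=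
  fun S => st_y s S +
    (if (S \in st_act s) && (free s S != set0) then rate * dt else 0).

Inductive step : state -> state -> Prop :=
| StepArrive (s : state) (v : 'I_m) :
    v \notin st_arr s -> atime v = st_time s ->
    step s (State (st_time s) (v |: st_arr s) ([set v] |: st_act s)
                  (st_match s) (st_y s))
| StepWait (s : state) (dt : R) :
    0 < dt ->
    (* no arrival is skipped *)
    (forall v, v \notin st_arr s -> st_time s + dt <= atime v) ->
    (* all pending tight pairs have been processed *)
    (forall u w, u \in st_arr s -> w \in st_arr s -> blk s u != blk s w ->
       ysum (st_y s) u w < rate * opt_cost u w) ->
    (forall u w, u \in st_arr s -> w \in st_arr s -> blk s u != blk s w ->
       ysum (grow s dt) u w <= rate * opt_cost u w) ->
    step s (State (st_time s + dt) (st_arr s) (st_act s) (st_match s)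
                  (grow s dt))
| StepMerge (s : state) (u w : 'I_m) (G : {set {set 'I_m}}) :
    u \in st_arr s -> w \in st_arr s -> blk s u != blk s w ->
    ysum (st_y s) u w = rate * opt_cost u w ->
    (* G: the groups formed by repeatedly picking k free requests of the
       merged set until fewer than k free requests remain *)
    (forall g, g \in G -> g \subset free s (blk s u :|: blk s w) /\ #|g| = k) ->
    trivIset G ->
    (#|free s (blk s u :|: blk s w) :\: cover G| < k)%N ->
    step s (State (st_time s) (st_arr s)
                  ((blk s u :|: blk s w) |: ((st_act s :\ blk s u) :\ blk s w))
                  (st_match s :|: G) (st_y s)).

Inductive reaches : state -> state -> Prop :=
| reaches_refl s : reaches s s
| reaches_step s1 s2 s3 : step s1 s2 -> reaches s2 s3 -> reaches s1 s3.

Definition group_cost (G : {set 'I_m}) : R :=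
  match enum G with
  | [::] => 0
  | v0 :: _ => dH (fun j : 'I_k => pos (nth v0 (enum G) j))
  end.

End GD.

(* Main.v *)
Require Import Defs.
From HB Require Import structures.
From mathcomp Require Import all_boot all_order all_algebra perm.
From mathcomp Require Import reals.
From mathcomp Require Import ring lra zify.
From Stdlib Require Import FunctionalExtensionality.
Set Implicit Arguments. Unset Strict Implicit. Unset Printing Implicit Defensive.
Import Order.TTheory GRing.Theory Num.Theory.
Local Open Scope ring_scope.


Lemma dist_ge0 (R : realType) (X : Type) (k gamma : nat) (dH : ('I_k -> X) -> R) p q :
  is_Hmetric dH gamma -> 0 <= dist dH p q.
Proof. by case=> H0 _ ; rewrite /dist addr_ge0. Qed.

Lemma dist_sym (R : realType) (X : Type) (k : nat) (dH : ('I_k -> X) -> R) p q :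
  dist dH p q = dist dH q p.
Proof. by rewrite /dist addrC. Qed.

Lemma dH_const (R : realType) (X : Type) (k gamma : nat) (dH : ('I_k -> X) -> R) (q : 'I_k -> X) :
  is_Hmetric dH gamma -> (forall i j, q i = q j) -> dH q = 0.
Proof. by case=> _ [_ [Hz _]] H; apply/Hz. Qed.

Lemma dist_refl (R : realType) (X : Type) (k gamma : nat) (dH : ('I_k -> X) -> R) p :
  is_Hmetric dH gamma -> dist dH p p = 0.
Proof.
move=> H; rewrite /dist !(dH_const H) ?addr0 // => i j; by case: ifP; case: ifP.
Qed.

Lemma dist_tri (R : realType) (X : Type) (k gamma : nat) (dH : ('I_k -> X) -> R) p q a :
  (1 <= k)%N -> is_Hmetric dH gamma -> dist dH p q <= dist dH p a + dist dH a q.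
Proof.
move=> k1 H; have [_ [_ [_ [Ht _]]]] := H.
have key : forall x y, dH (fun j : 'I_k => if nat_of_ord j == 0%N then x else y) <=
   dH (fun j : 'I_k => if nat_of_ord j == 0%N then x else a) +
   dH (fun j : 'I_k => if nat_of_ord j == 0%N then a else y).
  move=> x y; have := Ht (fun j : 'I_k => if nat_of_ord j == 0%N then x else y) a 1%N.
  rewrite k1 => /(_ isT).
  have -> : (fun j : 'I_k => if (j < 1)%N then (if nat_of_ord j == 0%N then x else y) else a)
     = (fun j : 'I_k => if nat_of_ord j == 0%N then x else a).
    by apply: functional_extensionality => -[[|j] ?].
  have -> : (fun j : 'I_k => if (j < 1)%N then a else (if nat_of_ord j == 0%N then x else y))
     = (fun j : 'I_k => if nat_of_ord j == 0%N then a else y).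
    by apply: functional_extensionality => -[[|j] ?].
  done.
rewrite /dist; have := key p q; have := key q p => h1 h2.
apply: le_trans (lerD h2 h1) _.
lra.

Qed.

Lemma dH_repl (R : realType) (X : Type) (k gamma : nat) (dH : ('I_k -> X) -> R) (q : 'I_k -> X) a (j : 'I_k) :
  (2 <= k)%N -> is_Hmetric dH gamma ->
  dH q <= dH (fun i => if i == j then a else q i) + dist dH (q j) a.
Proof.
move=> k2 H; have [H0 [Hp [_ [Ht _]]]] := H.
have lk : (k.-1 < k)%N by lia.
have l0 : (0 < k)%N by lia.
pose l : 'I_k := Ordinal lk.
pose o : 'I_k := Ordinal l0.
pose s := tperm j l.
have hk : (1 <= k.-1 <= k)%N by lia.
have := Ht (fun i => q (s i)) a k.-1 hk.
rewrite (Hp s q).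
have ltl : forall i : 'I_k, (i < k.-1)%N = (i != l).
  move=> i; apply/idP/idP.
    by move=> h; apply/eqP => /(congr1 val) /= e; rewrite e ltnn in h.
  move=> h; have := ltn_ord i; have : nat_of_ord i != k.-1.
    by apply/eqP => e; case/eqP: h; apply/val_inj.
  lia.
pose q' := fun i : 'I_k => if i == j then a else q i.
have -> : (fun i : 'I_k => if (i < k.-1)%N then q (s i) else a) = (fun i => q' (s i)).
  apply: functional_extensionality => i; rewrite ltl /q'.
  case: (eqVneq i l) => [->|nil]; first by rewrite /s tpermR eqxx.
  case: (eqVneq (s i) j) => // e.
  by case/eqP: nil; apply: (@perm_inj _ s); rewrite e /s tpermR.
rewrite (Hp s q').
pose g := fun i : 'I_k => if nat_of_ord i == 0%N then q j else a.
pose s' := tperm o l.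
have -> : (fun i : 'I_k => if (i < k.-1)%N then a else q (s i)) = (fun i => g (s' i)).
  apply: functional_extensionality => i; rewrite ltl /g.
  case: (eqVneq i l) => [->|nil]; first by rewrite /s' /s !tpermR /=.
  rewrite /s' /=; case: (eqVneq i o) => [->|nio].
    by rewrite tpermL /=; case: ifP => // /eqP; lia.
  rewrite tpermD 1?eq_sym //.
  by case: ifP => // /eqP e; case/eqP: nio; apply/val_inj.
rewrite (Hp s' g) => h; apply: le_trans h _; rewrite lerD2l /dist.
by rewrite lerDl H0.
Qed.

Lemma eqle (R : realType) (x y : R) : x = y -> x <= y. Proof. by move->. Qed.

Lemma dH_star (R : realType) (X : Type) (k gamma : nat) (dH : ('I_k -> X) -> R) (q : 'I_k -> X) a :
  (2 <= k)%N -> is_Hmetric dH gamma ->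
  dH q <= \sum_(i : 'I_k) dist dH (q i) a.
Proof.
move=> k2 H.
have claim : forall n, (n <= k)%N ->
  dH q <= dH (fun i : 'I_k => if (i < n)%N then a else q i)
          + \sum_(i : 'I_k | (i < n)%N) dist dH (q i) a.
  elim=> [_|n IH nk].
    rewrite big_pred0 // addr0.
    have -> : (fun i : 'I_k => if (i < 0)%N then a else q i) = q by [].
    done.
  apply: le_trans (IH (ltnW nk)) _.
  pose o : 'I_k := Ordinal nk.
  rewrite [X in _ <= _ + X](bigD1 o) /= ?ltnSn //.
  have := dH_repl (fun i : 'I_k => if (i < n)%N then a else q i) a o k2 H.
  rewrite /= ltnn => h; apply: le_trans (lerD h (lexx _)) _.
  rewrite -addrA lerD //.
    apply: eqle; congr dH; apply: functional_extensionality => i.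
    case: (eqVneq i o) => [->|nio] /=; first by rewrite ltnSn.
    have hin : nat_of_ord i != n by apply: contra nio => /eqP e; apply/eqP/val_inj.
    have -> : (i < n.+1)%N = (i < n)%N by lia.
    done.
  apply: eqle; congr (_ + _); apply: eq_bigl => i.
  case: (eqVneq i o) => [->|nio] /=; first by rewrite ltnn andbF.
  have hin : nat_of_ord i != n by apply: contra nio => /eqP e; apply/eqP/val_inj.
  have -> : (i < n.+1)%N = (i < n)%N by lia.
  by rewrite andbT.
have := claim k (leqnn k).
rewrite (dH_const (q := fun i : 'I_k => if (i < k)%N then a else q i) H); last first.
  by move=> i j; rewrite !ltn_ord.
rewrite add0r => h; apply: le_trans h _.
by apply: eqle; apply: eq_bigl => i; rewrite ltn_ord.
Qed.

Lemma group_cost_le (R : realType) (X : Type) (k gamma : nat) (dH : ('I_k -> X) -> R) (m : nat)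
   (pos : 'I_m -> X) (G : {set 'I_m}) C :
  (2 <= k)%N -> is_Hmetric dH gamma -> #|G| = k ->
  (forall u w, u \in G -> w \in G -> dist dH (pos u) (pos w) <= C) ->
  group_cost dH pos G <= k%:R * C.
Proof.
move=> k2 H cG hC; rewrite /group_cost.
have sz : size (enum G) = k by rewrite -cG cardE.
case E: (enum G) => [|v0 s]; first by rewrite E in sz; rewrite -sz in k2.
apply: le_trans (dH_star _ (pos v0) k2 H) _.
rewrite -[k in k%:R](card_ord k) -sum1_card natr_sum mulr_suml.
apply: ler_sum => i _; rewrite mul1r; apply: hC.
  by rewrite -mem_enum -E mem_nth // sz.
by rewrite -mem_enum E inE eqxx.
Qed.


Definition cf (m : nat) (S : {set 'I_m}) (u w : 'I_m) (S' : {set 'I_m}) : nat :=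
  if S' \subset S then (2 - (u \in S') - (w \in S'))%N else 0%N.

Definition Fv (R : realType) (m : nat) (y : {set 'I_m} -> R) (u w : 'I_m) (S : {set 'I_m}) : R :=
  \sum_(S' : {set 'I_m}) (cf S u w S')%:R * y S'.

Record Inv (R : realType) (X : Type) (k gamma : nat) (dH : ('I_k -> X) -> R) (m : nat)
   (atime : 'I_m -> R) (pos : 'I_m -> X) (s : state R m) : Prop := {
  i_triv : trivIset (st_act s);
  i_nz : set0 \notin st_act s;
  i_cov : cover (st_act s) = st_arr s;
  i_Mtriv : trivIset (st_match s);
  i_Msz : forall g, g \in st_match s -> #|g| = k;
  i_Min : forall g, g \in st_match s -> exists2 S, S \in st_act s & g \subset S;
  i_free : forall S, S \in st_act s -> (#|S :\: cover (st_match s)| < k)%N;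
  i_y0 : forall S, 0 <= st_y s S;
  i_ysupp : forall S, st_y s S != 0 -> [/\ S != set0, S \subset st_arr s &
       forall S0, S0 \in st_act s -> S \subset S0 \/ [disjoint S & S0]];
  i_ysur : forall S, st_y s S != 0 -> (0 < sur k S)%N;
  i_time : forall u, u \in st_arr s ->
       \sum_(S : {set 'I_m} | u \in S) st_y s S <= rate R k gamma * (st_time s - atime u);
  i_fut : forall v, v \notin st_arr s -> st_time s <= atime v;
  i_feas : forall u w, u \in st_arr s -> w \in st_arr s -> u != w ->
       ysum (st_y s) u w <= rate R k gamma * opt_cost dH atime pos u w;
  i_dist : forall S, S \in st_act s -> forall u w, u \in S -> w \in S ->
       dist dH (pos u) (pos w) <= (rate R k gamma)^-1 * Fv (st_y s) u w S
}.

Lemma rate_gt0 (R : realType) k gamma : (2 <= k)%N -> (1 <= gamma)%N -> 0 < rate R k gamma.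
Proof.
move=> k2 g1; rewrite /rate invr_gt0 mulr_gt0 // ?exprn_gt0 // ltr0n; lia.
Qed.

Lemma Fv_ge0 (R : realType) (m : nat) (y : {set 'I_m} -> R) u w S :
  (forall S, 0 <= y S) -> 0 <= Fv y u w S.
Proof. by move=> hy; apply: sumr_ge0 => S' _; rewrite mulr_ge0. Qed.

Lemma ysum_sym (R : realType) (m : nat) (y : {set 'I_m} -> R) u w :
  ysum y u w = ysum y w u.
Proof. by apply: eq_bigl => S; rewrite /in_delta eq_sym. Qed.

Lemma opt_cost_sym (R : realType) (X : Type) (k : nat) (dH : ('I_k -> X) -> R) (m : nat)
   (atime : 'I_m -> R) (pos : 'I_m -> X) u w :
  opt_cost dH atime pos u w = opt_cost dH atime pos w u.
Proof. by rewrite /opt_cost dist_sym distrC. Qed.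

Lemma feas_new (R : realType) (X : Type) (k gamma : nat) (dH : ('I_k -> X) -> R) (m : nat)
   (atime : 'I_m -> R) (pos : 'I_m -> X) (s : state R m) u w :
  (2 <= k)%N -> (1 <= gamma)%N -> is_Hmetric dH gamma ->
  Inv gamma dH atime pos s -> u \in st_arr s -> w \notin st_arr s ->
  ysum (st_y s) u w <= rate R k gamma * opt_cost dH atime pos u w.
Proof.
move=> k2 g1 H I ua wa.
have r0 := rate_gt0 R k2 g1.
apply: (@le_trans _ _ (\sum_(S : {set 'I_m} | u \in S) st_y s S)).
  rewrite /ysum big_mkcond [X in _ <= X]big_mkcond /=; apply: ler_sum => S _.
  have y0 := i_y0 I S.
  case: (eqVneq (st_y s S) 0) => [->|ny]; first by case: ifP; case: ifP.
  have [_ sub _] := i_ysupp I ny.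
  have wS : (w \in S) = false by apply/negbTE; apply: contra wa => /(subsetP sub).
  by rewrite /in_delta wS; case: (u \in S).
apply: le_trans (i_time I ua) _; apply: ler_wpM2l; first exact: ltW.
have := i_fut I wa; rewrite /opt_cost => hw.
have := dist_ge0 (pos u) (pos w) H; have := ler_norm (atime w - atime u).
rewrite distrC; lra.
Qed.

Lemma Inv_init (R : realType) (X : Type) (k gamma : nat) (dH : ('I_k -> X) -> R) (m : nat)
   (atime : 'I_m -> R) (pos : 'I_m -> X) :
  (forall v, 0 <= atime v) -> Inv gamma dH atime pos (init_state R m).
Proof.
move=> ha; split=> //=; rewrite ?in_set0 //.
- by apply/trivIsetP => A B; rewrite in_set0.
- by rewrite /cover big_set0.
- by apply/trivIsetP => A B; rewrite in_set0.
all: try by move=> ?; rewrite in_set0.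
all: try by move=> ? ?; rewrite in_set0.
all: by move=> ?; rewrite eqxx.
Qed.

Lemma Inv_arrive (R : realType) (X : Type) (k gamma : nat) (dH : ('I_k -> X) -> R) (m : nat)
   (atime : 'I_m -> R) (pos : 'I_m -> X) (s : state R m) v :
  (2 <= k)%N -> (1 <= gamma)%N -> is_Hmetric dH gamma ->
  Inv gamma dH atime pos s -> v \notin st_arr s -> atime v = st_time s ->
  Inv gamma dH atime pos (State (st_time s) (v |: st_arr s) ([set v] |: st_act s)
                  (st_match s) (st_y s)).
Proof.
move=> k2 g1 H I va vt.
have r0 := rate_gt0 R k2 g1.
have dis : forall B, B \in st_act s -> [disjoint [set v] & B].
  move=> B BA; rewrite disjoints1; apply: contra va => vB.
  by rewrite -(i_cov I); apply/bigcupP; exists B.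
have [triv' nin] := trivIsetU1 dis (i_triv I) (i_nz I).
split=> //=.
- rewrite !inE negb_or (i_nz I) andbT; apply/eqP => e.
  by have := in_set1 v v; rewrite -e in_set0 eqxx.
- by have e := i_cov I; rewrite /cover in e; rewrite /cover bigcup_setU e big_set1.
- exact: i_Mtriv I.
- exact: i_Msz I.
- by move=> g /(i_Min I) [S SA gS]; exists S => //; rewrite !inE SA orbT.
- move=> S; case/setU1P => [->|SA]; last exact: (i_free I SA).
  apply: leq_ltn_trans (subset_leq_card (subsetDl _ _)) _; rewrite cards1; lia.
- exact: i_y0 I.
- move=> S ny; have [S0 sub lam] := i_ysupp I ny; split=> //.
    by apply: subset_trans sub (subsetUr _ _).
  move=> S1; case/setU1P => [->|S1A]; last exact: lam.
  right; rewrite disjoint_sym disjoints1; apply: contra va => /(subsetP sub) //.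
- exact: i_ysur I.
- move=> u; case/setU1P => [->|ua]; last exact: (i_time I ua).
  rewrite vt subrr mulr0 big1 // => S vS.
  case: (eqVneq (st_y s S) 0) => // ny.
  by have [_ sub _] := i_ysupp I ny; case/negP: va; apply: (subsetP sub).
- by move=> u; rewrite !inE negb_or => /andP [_] /(i_fut I).
- move=> u w; case/setU1P => [->|ua]; case/setU1P => [->|wa]; rewrite ?eqxx //.
  + by move=> _; rewrite ysum_sym opt_cost_sym; exact: feas_new.
  + by move=> _; exact: feas_new.
  + exact: (i_feas I ua wa).
- move=> S; case/setU1P => [->|SA]; last exact: (i_dist I SA).
  move=> u w /set1P -> /set1P ->; rewrite (dist_refl _ H); apply: mulr_ge0; first by rewrite invr_ge0 ltW.
  exact: (Fv_ge0 _ _ _ (i_y0 I)).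
Qed.

Lemma blk_facts (R : realType) (X : Type) (k gamma : nat) (dH : ('I_k -> X) -> R) (m : nat)
   (atime : 'I_m -> R) (pos : 'I_m -> X) (s : state R m) u :
  Inv gamma dH atime pos s -> u \in st_arr s ->
  [/\ u \in blk s u, blk s u \in st_act s &
      forall S, S \in st_act s -> u \in S -> S = blk s u].
Proof.
move=> I ua; have uc : u \in cover (st_act s) by rewrite (i_cov I).
split; first by rewrite /blk mem_pblock.
  exact: pblock_mem.
by move=> S SA uS; rewrite /blk (def_pblock (i_triv I) SA uS).
Qed.

Lemma Fv_mono (R : realType) (m : nat) (y y' : {set 'I_m} -> R) u w S :
  (forall S, y S <= y' S) -> Fv y u w S <= Fv y' u w S.
Proof. by move=> h; apply: ler_sum => S' _; apply: ler_wpM2l. Qed.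

Lemma card_blk_mod (R : realType) (X : Type) (k gamma : nat) (dH : ('I_k -> X) -> R) (m : nat)
   (atime : 'I_m -> R) (pos : 'I_m -> X) (s : state R m) S :
  Inv gamma dH atime pos s -> S \in st_act s ->
  (k %| #|S :&: cover (st_match s)|)%N.
Proof.
move=> I SA.
pose P := [set g in st_match s | g \subset S].
have PM : P \subset st_match s by apply/subsetP => g; rewrite inE => /andP [].
have e : S :&: cover (st_match s) = cover P.
  apply/setP => x; apply/idP/idP.
    rewrite inE => /andP [xS /bigcupP [g gM xg]].
    apply/bigcupP; exists g => //; rewrite inE gM /=.
    have [S0 S0A gS0] := i_Min I gM.
    have xS0 : x \in S0 by apply: (subsetP gS0).
    case: (eqVneq S0 S) => [<- //|ne].
    have := (trivIsetP (i_triv I)) _ _ S0A SA ne.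
    by move/disjointFr => /(_ _ xS0); rewrite xS.
  move/bigcupP => [g]; rewrite inE => /andP [gM gS] xg.
  by rewrite inE (subsetP gS _ xg); apply/bigcupP; exists g.
rewrite e -(eqP (trivIsetS PM (i_Mtriv I))).
apply: dvdn_sum => g; rewrite inE => /andP [gM _]; by rewrite (i_Msz I gM).
Qed.

Lemma Inv_wait (R : realType) (X : Type) (k gamma : nat) (dH : ('I_k -> X) -> R) (m : nat)
   (atime : 'I_m -> R) (pos : 'I_m -> X) (s : state R m) dt :
  (2 <= k)%N -> (1 <= gamma)%N -> is_Hmetric dH gamma ->
  Inv gamma dH atime pos s -> 0 < dt ->
    (forall v, v \notin st_arr s -> st_time s + dt <= atime v) ->
    (forall u w, u \in st_arr s -> w \in st_arr s -> blk s u != blk s w ->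
       ysum (grow k gamma s dt) u w <= rate R k gamma * opt_cost dH atime pos u w) ->
  Inv gamma dH atime pos (State (st_time s + dt) (st_arr s) (st_act s) (st_match s)
                  (grow k gamma s dt)).
Proof.
move=> k2 g1 H I dt0 hfut hover.
have r0 := rate_gt0 R k2 g1.
have rdt0 : 0 <= rate R k gamma * dt by rewrite mulr_ge0 // ltW.
pose ex := fun S : {set 'I_m} =>
  (if (S \in st_act s) && (Defs.free s S != set0) then rate R k gamma * dt else 0).
have gE : forall S, grow k gamma s dt S = st_y s S + ex S by [].
have ex0 : forall S, 0 <= ex S by move=> S; rewrite /ex; case: ifP.
have exA : forall S, ex S != 0 -> S \in st_act s /\ Defs.free s S != set0.
  move=> S; rewrite /ex; case: ifP => [/andP [h1 h2] _ //|_]; by rewrite eqxx.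
have yle : forall S, st_y s S <= grow k gamma s dt S by move=> S; rewrite gE lerDl.
split=> //=.
- exact: i_triv I.
- exact: i_nz I.
- exact: i_cov I.
- exact: i_Mtriv I.
- exact: i_Msz I.
- exact: i_Min I.
- exact: i_free I.
- by move=> S; rewrite gE addr_ge0 // (i_y0 I).
- move=> S; case: (eqVneq (st_y s S) 0) => [y0|ny _]; last exact: (i_ysupp I ny).
  rewrite gE y0 add0r => /exA [SA _]; split.
  + by apply: contra (i_nz I) => /eqP <-.
  + by rewrite -(i_cov I); apply: bigcup_sup.
  + move=> S0 S0A; case: (eqVneq S S0) => [->|ne]; first by left.
    by right; exact: (trivIsetP (i_triv I)) _ _ SA S0A ne.
- move=> S; case: (eqVneq (st_y s S) 0) => [y0|ny _]; last exact: (i_ysur I ny).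
  rewrite gE y0 add0r => /exA [SA fr].
  have dv := card_blk_mod I SA.
  have fk := i_free I SA.
  rewrite /Defs.free -card_gt0 in fr.
  rewrite /sur -(cardsID (cover (st_match s)) S).
  case/dvdnP: dv => q ->; rewrite modnMDl modn_small //.
- move=> u ua; rewrite (eq_bigr (fun S => st_y s S + ex S)) // big_split /=.
  have [ub bA buniq] := blk_facts I ua.
  rewrite [X in _ + X <= _](bigD1 (blk s u)) //=.
  rewrite [X in _ + (_ + X) <= _]big1 ?addr0; last first.
    move=> S /andP [uS ne]; apply/eqP; apply: contraR ne => /exA [SA _].
    by apply/eqP; apply: buniq.
  have h1 := i_time I ua.
  have h2 : ex (blk s u) <= rate R k gamma * dt by rewrite /ex; case: ifP.
  have -> : rate R k gamma * (st_time s + dt - atime u) =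
     rate R k gamma * (st_time s - atime u) + rate R k gamma * dt.
    by rewrite -mulrDr; congr (_ * _); lra.
  exact: lerD.
- move=> u w ua wa uw; case: (eqVneq (blk s u) (blk s w)) => [e|ne]; last exact: hover.
  have [ub bA buniq] := blk_facts I ua.
  have [wb bwA bwuniq] := blk_facts I wa.
  apply: le_trans (i_feas I ua wa uw); apply: eqle.
  apply: eq_bigr => S sep; rewrite gE; suff -> : ex S = 0 by rewrite addr0.
  case: (eqVneq (ex S) 0) => // /exA [SA _]; exfalso; move: sep; rewrite /in_delta.
  case: (boolP (u \in S)) => uS.
    by rewrite (buniq _ SA uS) e wb.
  case: (boolP (w \in S)) => wS //.
  by move: uS; rewrite (bwuniq _ SA wS) -e ub.
- move=> S SA u w uS wS; apply: le_trans (i_dist I SA uS wS) _.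
  apply: ler_wpM2l; first by rewrite invr_ge0 ltW.
  exact: Fv_mono.
Qed.

Lemma disjP' (T : finType) (A B : {set T}) :
  (forall x, x \in A -> x \in B -> False) -> [disjoint A & B].
Proof.
move=> h; rewrite disjoints_subset; apply/subsetP => x xA; rewrite inE.
by apply/negP => xB; exact: h x xA xB.
Qed.

Lemma coef_ineq (sa sb sn xa xu xw xb : bool) :
 ~~ (sa && sb) -> (sa ==> sn) -> (sb ==> sn) ->
 (sa ==> ~~ xw && ~~ xb) -> (sb ==> ~~ xa && ~~ xu) ->
 (sa || ~~ xa && ~~ xu) -> (sb || ~~ xw && ~~ xb) ->
 ((if sa then 2 - xa - xu else 0) + (xu != xw) + (if sb then 2 - xw - xb else 0)
    <= (if sn then 2 - xa - xb else 0))%N.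
Proof. by case: sa; case: sb; case: sn; case: xa; case: xu; case: xw; case: xb. Qed.

Lemma Fv_sub (R : realType) (m : nat) (y : {set 'I_m} -> R) a b (S1 S2 : {set 'I_m}) :
  (forall S, 0 <= y S) -> S1 \subset S2 -> Fv y a b S1 <= Fv y a b S2.
Proof.
move=> y0 sub; apply: ler_sum => S' _; apply: ler_wpM2r => //; rewrite ler_nat /cf.
case: ifP => h; last by [].
by rewrite (subset_trans h sub).
Qed.

Lemma Fv_sym (R : realType) (m : nat) (y : {set 'I_m} -> R) a b (S : {set 'I_m}) :
  Fv y a b S = Fv y b a S.
Proof.
apply: eq_bigr => S' _; rewrite /cf; case: ifP => // _.
by case: (a \in S'); case: (b \in S').
Qed.

Lemma ysumE (R : realType) (m : nat) (y : {set 'I_m} -> R) u w :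
  ysum y u w = \sum_(S : {set 'I_m}) (in_delta S u w)%:R * y S.
Proof.
rewrite /ysum big_mkcond; apply: eq_bigr => S _.
by case: (in_delta S u w); rewrite ?mul1r ?mul0r.
Qed.

Lemma cross_bound (R : realType) (X : Type) (k gamma : nat) (dH : ('I_k -> X) -> R) (m : nat)
   (atime : 'I_m -> R) (pos : 'I_m -> X) (s : state R m) (Bu Bw : {set 'I_m}) u w a b :
  (2 <= k)%N -> (1 <= gamma)%N -> is_Hmetric dH gamma ->
  Inv gamma dH atime pos s -> Bu \in st_act s -> Bw \in st_act s -> Bu != Bw ->
  u \in Bu -> a \in Bu -> w \in Bw -> b \in Bw ->
  ysum (st_y s) u w = rate R k gamma * opt_cost dH atime pos u w ->
  dist dH (pos a) (pos b) <= (rate R k gamma)^-1 * Fv (st_y s) a b (Bu :|: Bw).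
Proof.
move=> k2 g1 H I BuA BwA ne uB aB wB bB tight.
have r0 := rate_gt0 R k2 g1.
have k1 : (1 <= k)%N by lia.
have dis := (trivIsetP (i_triv I)) _ _ BuA BwA ne.
have d1 := i_dist I BuA aB uB.
have d2 := i_dist I BwA wB bB.
have d3 : dist dH (pos u) (pos w) <= (rate R k gamma)^-1 * ysum (st_y s) u w.
  rewrite tight mulrA mulVf ?mul1r; last by rewrite gt_eqF.
  by rewrite /opt_cost lerDl normr_ge0.
have tri : dist dH (pos a) (pos b) <=
   dist dH (pos a) (pos u) + dist dH (pos u) (pos w) + dist dH (pos w) (pos b).
  have t1 := dist_tri (pos a) (pos b) (pos u) k1 H.
  have t2 := dist_tri (pos u) (pos b) (pos w) k1 H.
  lra.
apply: le_trans tri _.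
apply: le_trans (lerD (lerD d1 d3) d2) _.
rewrite -!mulrDr; apply: ler_wpM2l; first by rewrite invr_ge0 ltW.
rewrite ysumE /Fv -!big_split /=; apply: ler_sum => S' _.
have [y0|ny] := eqVneq (st_y s S') 0; first by rewrite y0 !mulr0 !addr0.
rewrite -!mulrDl; apply: ler_wpM2r; first exact: (i_y0 I S').
rewrite -!natrD ler_nat /cf /in_delta.
have [Sn Sarr lam] := i_ysupp I ny.
apply: coef_ineq.
- apply/negP => /andP [s1 s2]; case/set0Pn: Sn => x xS.
  by have := disjointFr dis (subsetP s1 _ xS); rewrite (subsetP s2 _ xS).
- by apply/implyP => h; rewrite (subset_trans h (subsetUl _ _)).
- by apply/implyP => h; rewrite (subset_trans h (subsetUr _ _)).
- apply/implyP => h; apply/andP; split; apply/negP => xS.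
    by have := disjointFr dis (subsetP h _ xS); rewrite wB.
  by have := disjointFr dis (subsetP h _ xS); rewrite bB.
- apply/implyP => h; apply/andP; split; apply/negP => xS.
    by have := disjointFl dis (subsetP h _ xS); rewrite aB.
  by have := disjointFl dis (subsetP h _ xS); rewrite uB.
- case: (lam _ BuA) => [-> //|dS]; apply/orP; right; apply/andP; split; apply/negP => xS.
    by have := disjointFr dS xS; rewrite aB.
  by have := disjointFr dS xS; rewrite uB.
- case: (lam _ BwA) => [-> //|dS]; apply/orP; right; apply/andP; split; apply/negP => xS.
    by have := disjointFr dS xS; rewrite wB.
  by have := disjointFr dS xS; rewrite bB.
Qed.

Lemma Inv_merge (R : realType) (X : Type) (k gamma : nat) (dH : ('I_k -> X) -> R) (m : nat)
   (atime : 'I_m -> R) (pos : 'I_m -> X) (s : state R m) u w (G : {set {set 'I_m}}) :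
  (2 <= k)%N -> (1 <= gamma)%N -> is_Hmetric dH gamma ->
  Inv gamma dH atime pos s ->
    u \in st_arr s -> w \in st_arr s -> blk s u != blk s w ->
    ysum (st_y s) u w = rate R k gamma * opt_cost dH atime pos u w ->
    (forall g, g \in G -> g \subset Defs.free s (blk s u :|: blk s w) /\ #|g| = k) ->
    trivIset G ->
    (#|Defs.free s (blk s u :|: blk s w) :\: cover G| < k)%N ->
  Inv gamma dH atime pos (State (st_time s) (st_arr s)
                  ((blk s u :|: blk s w) |: ((st_act s :\ blk s u) :\ blk s w))
                  (st_match s :|: G) (st_y s)).
Proof.
move=> k2 g1 H I ua wa ne tight hG trG hfree.
have [ub bA buniq] := blk_facts I ua.
have [wb bwA bwuniq] := blk_facts I wa.
set Bu := blk s u in ub bA buniq ne tight hG hfree *.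
set Bw := blk s w in wb bwA bwuniq ne tight hG hfree *.
set N := Bu :|: Bw.
set A'' := (st_act s :\ Bu) :\ Bw.
have dis := (trivIsetP (i_triv I)) _ _ bA bwA ne.
have inA'' : forall B, (B \in A'') = [&& B != Bw, B != Bu & B \in st_act s].
  by move=> B; rewrite !in_setD1.
have A''A : forall B, B \in A'' -> B \in st_act s by move=> B; rewrite inA'' => /and3P [].
have disN : forall B, B \in A'' -> [disjoint N & B].
  move=> B; rewrite inA'' => /and3P [n1 n2 BA].
  have d1 := (trivIsetP (i_triv I)) _ _ bA BA (negbT (introF eqP (fun e => (negP n2) (introT eqP (esym e))))).
  have d2 := (trivIsetP (i_triv I)) _ _ bwA BA (negbT (introF eqP (fun e => (negP n1) (introT eqP (esym e))))).
  apply: disjP' => x; rewrite inE => /orP [] xB xB'.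
    by have := disjointFr d1 xB; rewrite xB'.
  by have := disjointFr d2 xB; rewrite xB'.
have trA'' : trivIset A'' by apply: trivIsetS (i_triv I); apply/subsetP => B /A''A.
have nzA'' : set0 \notin A'' by apply: contra (i_nz I) => /A''A.
have [trA' _] := trivIsetU1 disN trA'' nzA''.
have NA : N \subset st_arr s.
  by rewrite -(i_cov I); apply/subsetP => x; rewrite inE => /orP [] xB;
     apply/bigcupP; [exists Bu | exists Bw].
have coverG : cover G \subset Defs.free s N.
  by apply/subsetP => x /bigcupP [g gG xg]; have [/subsetP h _] := hG g gG; apply: h.
have coverM' : cover (st_match s :|: G) = cover (st_match s) :|: cover G.
  by rewrite /cover bigcup_setU.
split=> //=.
- rewrite in_setU1 negb_or nzA'' andbT eq_sym; apply/set0Pn; exists u; by rewrite inE ub.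

- apply/setP => x; rewrite -(i_cov I); apply/bigcupP/bigcupP.
    case=> B; case/setU1P => [->|BA'' xB].
      by rewrite inE => /orP [] xB; [exists Bu | exists Bw].
    by exists B => //; apply: A''A.
  case=> B BA xB; case: (eqVneq B Bu) => [eB|nBu].
    by exists N; rewrite ?inE ?eqxx //; rewrite -eB xB.
  case: (eqVneq B Bw) => [eB|nBw].
    by exists N; rewrite ?inE ?eqxx //; rewrite -eB xB orbT.
  by exists B => //; rewrite inE inA'' nBu nBw BA orbT.
- apply: trivIsetU => //; first exact: i_Mtriv I.
  apply: disjP' => x xM xG.
  by have := subsetP coverG _ xG; rewrite inE xM.
- move=> g; case/setUP => [gM|gG]; first exact: (i_Msz I gM).
  by have [_ ->] := hG g gG.
- move=> g; case/setUP => [gM|gG].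
    have [S0 S0A gS0] := i_Min I gM.
    case: (eqVneq S0 Bu) => [e|n1].
      by exists N; first exact: setU11; apply: subset_trans gS0 _; rewrite e subsetUl.
    case: (eqVneq S0 Bw) => [e|n2].
      by exists N; first exact: setU11; apply: subset_trans gS0 _; rewrite e subsetUr.
    by exists S0 => //; rewrite inE inA'' n1 n2 S0A orbT.
  exists N; first exact: setU11.
  by have [h _] := hG g gG; apply: subset_trans h (subsetDl _ _).
- move=> S; case/setU1P => [->|SA''].
    by rewrite coverM' -setDDl.
  apply: leq_ltn_trans (i_free I (A''A _ SA'')).
  by apply: subset_leq_card; rewrite coverM' setDS // subsetUl.
- exact: i_y0 I.
- move=> S ny; have [Sn Sarr lam] := i_ysupp I ny; split=> // S0.
  case/setU1P => [->|S0A]; last exact: (lam _ (A''A _ S0A)).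
  case: (lam _ bA) => [h|d1]; first by left; apply: subset_trans h (subsetUl _ _).
  case: (lam _ bwA) => [h|d2]; first by left; apply: subset_trans h (subsetUr _ _).
  right; apply: disjP' => x xS; rewrite inE => /orP [] xB.
    by have := disjointFr d1 xS; rewrite xB.
  by have := disjointFr d2 xS; rewrite xB.
- exact: i_ysur I.
- exact: i_time I.
- exact: i_fut I.
- exact: i_feas I.
- move=> S; case/setU1P => [->|SA'']; last exact: (i_dist I (A''A _ SA'')).
  have y0 := i_y0 I.
  move=> a b; rewrite !inE => /orP [] aB /orP [] bB.
  + apply: le_trans (i_dist I bA aB bB) _; apply: ler_wpM2l; first by rewrite invr_ge0 ltW // rate_gt0.
    exact: Fv_sub (subsetUl _ _).
  + exact: cross_bound k2 g1 H I bA bwA ne ub aB wb bB tight.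
  + rewrite dist_sym Fv_sym.
    exact: cross_bound k2 g1 H I bA bwA ne ub bB wb aB tight.
  + apply: le_trans (i_dist I bwA aB bB) _; apply: ler_wpM2l; first by rewrite invr_ge0 ltW // rate_gt0.
    exact: Fv_sub (subsetUr _ _).
Qed.


Lemma Inv_reaches (R : realType) (X : Type) (k gamma : nat) (dH : ('I_k -> X) -> R) (m : nat)
   (atime : 'I_m -> R) (pos : 'I_m -> X) (s1 s2 : state R m) :
  (2 <= k)%N -> (1 <= gamma)%N -> is_Hmetric dH gamma ->
  reaches gamma dH atime pos s1 s2 -> Inv gamma dH atime pos s1 -> Inv gamma dH atime pos s2.
Proof.
move=> k2 g1 H; elim=> // s s' s'' st _ IH I; apply: IH.
case: st I => {s s' s''}.
- by move=> s v va vt I; apply: Inv_arrive.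
- by move=> s dt dt0 hf _ ho I; apply: Inv_wait.
- by move=> s u w G ua wa ne ti hG trG hfr I; apply: Inv_merge.
Qed.

Lemma Fv_le2 (R : realType) (m : nat) (y : {set 'I_m} -> R) u w S :
  (forall S, 0 <= y S) -> Fv y u w S <= 2 * \sum_(S' : {set 'I_m}) y S'.
Proof.
move=> y0; rewrite mulr_sumr; apply: ler_sum => S' _; apply: ler_wpM2r => //.
rewrite -[2]/(2%:R) ler_nat /cf; case: ifP => // _; lia.
Qed.

Lemma opt_cost_ge0 (R : realType) (X : Type) (k gamma : nat) (dH : ('I_k -> X) -> R) (m : nat)
   (atime : 'I_m -> R) (pos : 'I_m -> X) u w :
  is_Hmetric dH gamma -> 0 <= opt_cost dH atime pos u w.
Proof. by move=> H; rewrite /opt_cost addr_ge0 ?(dist_ge0 _ _ H). Qed.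

Lemma dual_obj_le_opt (R : realType) (X : Type) (k gamma : nat) (dH : ('I_k -> X) -> R) (m : nat)
   (atime : 'I_m -> R) (pos : 'I_m -> X) (y : {set 'I_m} -> R) :
  (0 < k)%N -> is_Hmetric dH gamma -> (k %| m)%N ->
  dual_feasible gamma dH atime pos y -> dual_obj k y <= dual_opt gamma dH atime pos.
Proof.
move=> k0 H km fy.
pose bnd := rate R k gamma * \sum_(u : 'I_m) \sum_(w : 'I_m) opt_cost dH atime pos u w.
have r0 : 0 <= rate R k gamma.
  by rewrite /rate invr_ge0 mulr_ge0 // exprn_ge0.
have bnd0 : 0 <= bnd.
  by rewrite mulr_ge0 // sumr_ge0 // => u _; rewrite sumr_ge0 // => w _; apply: opt_cost_ge0 H.
have ub : forall y', dual_feasible gamma dH atime pos y' ->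
    dual_obj k y' <= \sum_(S : {set 'I_m}) (k * k)%:R * bnd.
  move=> y' [y0 fe]; apply: ler_sum => S _.
  have sk : (sur k S <= k)%N by rewrite /sur ltnW // ltn_mod.
  case: (posnP (sur k S)) => [s0|sp].
    by rewrite s0 !mul0r mulr_ge0.
  have Sn : S != set0 by apply: contraTneq sp => ->; rewrite /sur cards0 mod0n.
  have ST : ~: S != set0.
    apply: contraTneq sp => e; have : S = setT by apply/setP => x; move/setP: e => /(_ x); rewrite !inE; case: (x \in S).
    by move=> ->; rewrite /sur cardsT card_ord; move: km; rewrite /dvdn => /eqP ->.
  case/set0Pn: Sn => u uS; case/set0Pn: ST => w; rewrite inE => wS.
  have uw : u != w by apply: contraNneq wS => <-.
  have h1 : y' S <= ysum y' u w.
    rewrite /ysum (bigD1 S) /=; last by rewrite /in_delta uS (negbTE wS).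
    by rewrite lerDl sumr_ge0.
  have h2 : opt_cost dH atime pos u w <= \sum_(u : 'I_m) \sum_(w : 'I_m) opt_cost dH atime pos u w.
    rewrite (bigD1 u) //= (bigD1 w) //= -addrA lerDl addr_ge0 // sumr_ge0 // => i _.
      by apply: opt_cost_ge0 H.
    by rewrite sumr_ge0 // => j _; apply: opt_cost_ge0 H.
  have h3 : y' S <= bnd by apply: le_trans h1 (le_trans (fe _ _ uw) _); apply: ler_wpM2l.
  rewrite -natrM; apply: ler_pM => //.
    by rewrite ler_nat leq_mul // leq_subr.
have hs : classical_sets.has_sup (fun z : R => exists2 y, dual_feasible gamma dH atime pos y & dual_obj k y = z).
  split; first by exists (dual_obj k y); exists y.
  by exists (\sum_(S : {set 'I_m}) (k * k)%:R * bnd) => z [y' fy' <-]; apply: ub.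
by apply: (sup_upper_bound hs); exists y.
Qed.

Unset Implicit Arguments.

Theorem lemma7 (R : realType) (X : Type) (k gamma : nat)
    (dH : ('I_k -> X) -> R) (m : nat) (atime : 'I_m -> R) (pos : 'I_m -> X)
    (sf : state R m) :
  (2 <= k)%N -> (1 <= gamma <= k.-1)%N -> is_Hmetric dH gamma ->
  (k %| m)%N ->
  (forall v, 0 <= atime v) ->
  (forall u v : 'I_m, (u <= v)%N -> atime u <= atime v) ->
  reaches gamma dH atime pos (init_state R m) sf ->
  cover (st_match sf) = [set: 'I_m] ->
  \sum_(G in st_match sf) group_cost dH pos G
    <= 4%:R * gamma%:R * m%:R * k%:R * dual_obj k (st_y sf)
  /\ 4%:R * gamma%:R * m%:R * k%:R * dual_obj k (st_y sf)
    <= 4%:R * gamma%:R * m%:R * k%:R * dual_opt gamma dH atime pos.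
Proof.
move=> k2 /andP [g1 _] H km a0 _ re cM.
have I := Inv_reaches k2 g1 H re (Inv_init gamma dH pos a0).
have y0 := i_y0 I.
have r0 := rate_gt0 R k2 g1.
have c0E : (rate R k gamma)^-1 = gamma%:R * k%:R ^+ 2 by rewrite /rate invrK.
pose Y := \sum_(S : {set 'I_m}) st_y sf S.
have gc : forall g, g \in st_match sf ->
    group_cost dH pos g <= k%:R * ((rate R k gamma)^-1 * (2 * Y)).
  move=> g gM; apply: (group_cost_le k2 H (i_Msz I gM)) => u w ug wg.
  have [S SA gS] := i_Min I gM.
  apply: le_trans (i_dist I SA (subsetP gS _ ug) (subsetP gS _ wg)) _.
  apply: ler_wpM2l; first by rewrite invr_ge0 ltW.
  exact: Fv_le2.
have sumM : (\sum_(g in st_match sf) #|g| = m)%N.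
  by rewrite (eqP (i_Mtriv I)) cM cardsT card_ord.
have cardM : (#|st_match sf| * k = m)%N.
  have e : (\sum_(g in st_match sf) #|g| = #|st_match sf| * k)%N.
    rewrite (eq_bigr (fun _ => k)) ?sum_nat_const //.
    by move=> g gM; rewrite (i_Msz I gM).
  by rewrite -e sumM.
have key : k%:R * Y <= 2 * dual_obj k (st_y sf).
  rewrite /Y /dual_obj !mulr_sumr; apply: ler_sum => S _.
  have [->|ny] := eqVneq (st_y sf S) 0; first by rewrite !mulr0.
  have sp := i_ysur I ny.
  have sk : (sur k S < k)%N by rewrite /sur ltn_mod; lia.
  rewrite !mulrA -!natrM; apply: ler_wpM2r; first exact: y0.
  rewrite ler_nat; nia.
have allarr : forall u, u \in st_arr sf.
  move=> u; have : u \in cover (st_match sf) by rewrite cM inE.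
  case/bigcupP => g gM ug; have [S SA gS] := i_Min I gM.
  by rewrite -(i_cov I); apply/bigcupP; exists S => //; apply: (subsetP gS).
split.
  apply: le_trans (ler_sum _ gc) _; rewrite sumr_const -mulr_natr c0E.
  have mE : m%:R = (#|st_match sf|)%:R * k%:R :> R by rewrite -natrM cardM.
  rewrite mE.
  have c0 : 0 <= 2 * gamma%:R * (#|st_match sf|)%:R * k%:R ^+ 2 :> R.
    by rewrite !mulr_ge0 // exprn_ge0.
  have := ler_wpM2l c0 key.
  set D := dual_obj k (st_y sf).
  move=> h; apply: le_trans _ (le_trans h _); apply: eqle.
  - rewrite expr2; ring.
  - rewrite expr2; ring.
apply: ler_wpM2l; first by rewrite !mulr_ge0.
apply: dual_obj_le_opt => //; first lia.
split=> // u w uw; exact: (i_feas I (allarr u) (allarr w) uw).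
Qed.
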